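(* Let $L$ be a positive integer and let $J \subseteq [L]$ be a nonempty subset with $l := |J|$. Then for every $\alpha \in (0,1)$ there exist $j_1, j_2 \in J$ such that (i) $l/2 \le j_1 \le j_2 \le (1+\alpha) j_1$; (ii) $|J \cap [j_1, j_2]| \ge c_\alpha \dfrac{l}{\log(2L/l)}$, where $c_\alpha > 0$ depends only on $\alpha$.
   Context: $[L] = \{1,\ldots,L\}$; $[j_1,j_2]$ denotes the set of integers between $j_1$ and $j_2$. Logarithms are to base $2$. *)

(* Defs.v *)
From Stdlib Require Import Reals.
From mathcomp Require Import all_boot.
Open Scope R_scope.

Definition log2 (x : R) : R := ln x / ln 2.

(* |J ∩ [j1, j2]| for J given as a duplicate-free list of naturals. *)
Definition count_in (J : seq nat) (j1 j2 : nat) : nat :=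
  size [seq j <- J | (j1 <= j)%N && (j <= j2)%N].

(* Main.v *)
Require Import Defs.
From Stdlib Require Import Reals Lra Classical ZArith.
From mathcomp Require Import all_boot zify.
Open Scope R_scope.

Definition rleb (x y : R) : bool := if Rle_dec x y then true else false.

Lemma rlebP x y : reflect (x <= y) (rleb x y).
Proof. rewrite /rleb; case: Rle_dec => H; constructor; auto. Qed.

Lemma count_split_in (T : eqType) (p q r : pred T) (s : seq T) :
  (forall x, x \in s -> p x -> q x || r x) ->
  (count p s <= count q s + count r s)%N.
Proof.
elim: s => //= x s IH H.
have := IH (fun y ys => H y (mem_behead (s:=x::s) ys)).
have := H x (mem_head x s).
case: (p x) => /=; last by case: (q x); case: (r x) => /=; lia.
move=> /(_ isT); case: (q x); case: (r x) => //= _; lia.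
Qed.

Lemma step_count (alpha b M : R) (L : nat) (J : seq nat) :
  0 < alpha -> 0 <= b -> 0 <= M ->
  all (fun j => (j <= L)%N) J ->
  (forall j1 j2, j1 \in J -> j2 \in J -> b <= INR j1 -> (j1 <= j2)%N ->
     INR j2 <= (1+alpha)*INR j1 -> INR (count_in J j1 j2) <= M) ->
  forall k a, b <= a -> INR L < a * (1+alpha)^k ->
    INR (count (fun x => rleb a (INR x)) J) <= INR k * M.
Proof.
move=> Ha Hb HM Hall HJ k; elim: k => [|k IH] a Hba HLa.
  have -> : count (fun x => rleb a (INR x)) J = 0%N.
    apply/eqP; rewrite -leqn0 leqNgt -has_count; apply/hasP => -[x xJ /rlebP Hx].
    move/allP: Hall => /(_ x xJ) /leP /le_INR; simpl in HLa; lra.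
  simpl; lra.
case: (boolP (has (fun x => rleb a (INR x)) J)) => Hh; last first.
  have -> : count (fun x => rleb a (INR x)) J = 0%N.
    by apply/eqP; rewrite -leqn0 leqNgt -has_count.
  have := pos_INR k.+1; simpl; nra.
have exP : exists n, (n \in J) && rleb a (INR n).
  by case/hasP: Hh => x xJ Hx; exists x; rewrite xJ.
case: (ex_minnP exP) => j1 /andP[j1J /rlebP aj1] minj1.
have Hj1pos := pos_INR j1.
set Q := fun n => [&& n \in J, (j1 <= n)%N & rleb (INR n) ((1+alpha)*INR j1)].
have exQ : exists n, Q n.
  exists j1; rewrite /Q j1J leqnn /=; apply/rlebP; nra.
have ubQ : forall n, Q n -> (n <= L)%N.
  by move=> n /and3P[nJ _ _]; move/allP: Hall => /(_ n nJ).
case: (ex_maxnP exQ ubQ) => j2 /and3P[j2J j12 /rlebP Hj2] maxj2.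
set a' := (1+alpha) * INR j1.
have Hsplit : (count (fun x => rleb a (INR x)) J <=
   count (fun x => (j1 <= x)%N && (x <= j2)%N) J + count (fun x => rleb a' (INR x)) J)%N.
  apply: count_split_in => x xJ Hx.
  have j1x : (j1 <= x)%N by apply: minj1; rewrite xJ.
  case: (leqP x j2) => xj2; first by rewrite j1x.
  apply/orP; right; apply/rlebP.
  case: (Rle_dec a' (INR x)) => // Hn.
  have : Q x by rewrite /Q xJ j1x /=; apply/rlebP; rewrite -/a'; lra.
  move/maxj2; lia.
have Hcin : INR (count_in J j1 j2) <= M.
  apply: HJ => //; lra.
have IH' := IH a'.
have Hpk := pow_lt (1+alpha) k ltac:(lra).
have : INR (count (fun x => rleb a' (INR x)) J) <= INR k * M.
  have Haj := Rmult_le_pos alpha (INR j1) ltac:(lra) Hj1pos.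
  apply: IH'; first by rewrite /a'; lra.
  have Hq := Rmult_le_pos (INR j1 - a) ((1+alpha)*(1+alpha)^k) ltac:(lra) ltac:(nra).
  rewrite /a'; simpl in HLa; nra.
move: Hsplit => /leP /le_INR; rewrite plus_INR.
rewrite /count_in size_filter in Hcin.
rewrite S_INR; lra.
Qed.

Lemma size_le_L (L : nat) (J : seq nat) : uniq J ->
  all (fun j => (1 <= j)%N && (j <= L)%N) J -> (size J <= L)%N.
Proof.
move=> HU Hall.
rewrite -(size_iota 1 L); apply: uniq_leq_size => // x xJ.
move/allP: Hall => /(_ x xJ) /andP[h1 h2]; rewrite mem_iota; lia.
Qed.

Lemma half_count (J : seq nat) : uniq J -> all (fun j => (1 <= j)%N) J ->
  INR (size J) / 2 <= INR (count (fun x => rleb (INR (size J) / 2) (INR x)) J).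
Proof.
move=> HU Hall; set l := size J.
have -> : count (fun x => rleb (INR l / 2) (INR x)) J = count (fun x => (l <= 2 * x)%N) J.
  apply: eq_count => x /=; apply/rlebP/idP.
    move=> H; apply/leP; apply: INR_le; rewrite mult_INR /=; lra.
  move/leP/le_INR; rewrite mult_INR /=; lra.
have Hc := count_predC (fun x => (l <= 2 * x)%N) J.
have Hs : (count (predC (fun x => (l <= 2 * x)%N)) J <= l %/ 2)%N.
  rewrite -size_filter -(size_iota 1 (l %/ 2)).
  apply: uniq_leq_size; first exact: filter_uniq.
  move=> x; rewrite mem_filter => /andP[/= Hx xJ].
  move/allP: Hall => /(_ x xJ) h1; rewrite mem_iota; lia.
have : (l <= 2 * count (fun x => (l <= 2 * x)%N) J)%N by rewrite -/l in Hc; lia.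
move/leP/le_INR; rewrite mult_INR /=; lra.
Qed.

Theorem lemma3p2 :
  forall alpha : R, 0 < alpha < 1 ->
  exists c : R, 0 < c /\
    forall (L : nat) (J : seq nat),
      (0 < L)%N ->
      uniq J ->
      J <> [::] ->
      all (fun j => (1 <= j)%N && (j <= L)%N) J ->
      exists j1 j2 : nat,
        (j1 \in J) /\ (j2 \in J) /\
        INR (size J) / 2 <= INR j1 /\ (j1 <= j2)%N /\
        INR j2 <= (1 + alpha) * INR j1 /\
        INR (count_in J j1 j2) >=
          c * (INR (size J) / log2 (2 * INR L / INR (size J))).
Proof.
move=> alpha [Ha0 Ha1].
have Hln2 : 0 < ln 2 by rewrite -ln_1; apply: ln_increasing; lra.
set beta := ln (1 + alpha).
have Hbeta : 0 < beta by rewrite /beta -ln_1; apply: ln_increasing; lra.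
set D := / beta + / ln 2.
have HD : 0 < D by rewrite /D; have := Rinv_0_lt_compat _ Hbeta; have := Rinv_0_lt_compat _ Hln2; lra.
exists (/ (4 * ln 2 * D)); split.
  apply: Rinv_0_lt_compat; nra.
move=> L J HL HU HJ Hall.
set l := size J.
have Hl0 : (0 < l)%N by rewrite /l; move: HJ; case: (J).
have HlL : (l <= L)%N by exact: size_le_L.
have Hlr : 0 < INR l by apply: lt_0_INR; apply/ltP.
have HlLr : INR l <= INR L by apply: le_INR; apply/leP.
set T := 2 * INR L / INR l.
have HT : 2 <= T.
  rewrite /T; apply (Rmult_le_reg_r (INR l)) => //.
  rewrite /Rdiv Rmult_assoc Rinv_l; lra.
have HlnT : ln 2 <= ln T.
  case: (Req_dec T 2) => [->|hT]; first lra.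
  left; apply: ln_increasing; lra.
set M := / (4 * ln 2 * D) * (INR l / log2 T).
have HM : 0 < M.
  rewrite /M /log2; apply: Rmult_lt_0_compat; first (apply: Rinv_0_lt_compat; nra).
  apply: Rdiv_lt_0_compat => //; apply: Rdiv_lt_0_compat; lra.
apply: NNPP => Hneg.
have Hcnt : forall j1 j2, j1 \in J -> j2 \in J -> INR l / 2 <= INR j1 -> (j1 <= j2)%N ->
     INR j2 <= (1+alpha)*INR j1 -> INR (count_in J j1 j2) <= M.
  move=> j1 j2 h1 h2 h3 h4 h5.
  case: (Rle_dec (INR (count_in J j1 j2)) M) => // hn.
  have hlt := Rnot_le_lt _ _ hn.
  exfalso; apply: Hneg; exists j1, j2.
  split; first done. split; first done. split; first done.
  split; first done. split; first done. lra.
have [Hup1 Hup2] := archimed (ln T / beta).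
have Hq : 0 < ln T / beta by apply: Rdiv_lt_0_compat; lra.
set z := up (ln T / beta) in Hup1 Hup2.
have Hz : (0 <= z)%Z by apply: le_IZR; lra.
set K := Z.to_nat z.
have HK : INR K = IZR z by rewrite /K INR_IZR_INZ Z2Nat.id.
have Hall' : all (fun j => (j <= L)%N) J.
  by apply/allP => x xJ; move/allP: Hall => /(_ x xJ) /andP[].
have Hbound := step_count alpha (INR l / 2) M L J Ha0 ltac:(lra) ltac:(lra) Hall' Hcnt K (INR l / 2) (Rle_refl _).
have Hall1 : all (fun j => (1 <= j)%N) J.
  by apply/allP => x xJ; move/allP: Hall => /(_ x xJ) /andP[].
have Hhalf := half_count J HU Hall1.
have Hgrow : INR L < INR l / 2 * (1 + alpha) ^ K.
  rewrite -Rpower_pow; last lra.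
  have HTe : T < Rpower (1 + alpha) (INR K).
    rewrite /Rpower -(exp_ln T); last lra.
    apply: exp_increasing; rewrite -/beta.
    have : ln T / beta * beta = ln T by field; lra.
    nra.
  have : INR l / 2 * T = INR L by rewrite /T; field; lra.
  nra.
have := Hbound Hgrow.
rewrite -/l => Hb.
have HKM : INR K * M <= INR l / 4.
  have HlnTpos : 0 < ln T by lra.
  have HKle : INR K <= ln T / beta + 1 by lra.
  have Hm : M = INR l * ln 2 / (4 * ln 2 * D * ln T).
    by rewrite /M /log2; field; repeat split; lra.
  rewrite Hm.
  have HKT : INR K / ln T <= D.
    rewrite /D; apply: (Rmult_le_reg_r (ln T)) => //.
    have -> : INR K / ln T * ln T = INR K by field; lra.
    have : / beta * ln T = ln T / beta by rewrite /Rdiv Rmult_comm.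
    have : / ln 2 * ln T >= 1.
      apply: Rle_ge; apply: (Rmult_le_reg_l (ln 2)) => //.
      rewrite -Rmult_assoc Rinv_r; lra.
    lra.
  have -> : INR K * (INR l * ln 2 / (4 * ln 2 * D * ln T)) = (INR K / ln T) * (INR l / (4 * D)).
    by field; repeat split; lra.
  have -> : INR l / 4 = D * (INR l / (4 * D)) by field; lra.
  apply: Rmult_le_compat_r => //.
  left; apply: Rdiv_lt_0_compat; lra.
move: Hhalf; rewrite -/l => Hhalf; lra.
Qed.
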